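(* Let $\alpha\in\mathbb{R}$ and let $\mathbb{Q}[x]^+_{x=\alpha}=\{p\in\mathbb{Q}[x]: p(\alpha)>0\}$. Suppose $\mathbb{Q}[x]^+_{x=\alpha}=H_1\sqcup H_2$ with $H_1,H_2$ disjoint nonempty subsets, each closed under addition and multiplication. Let $H_+=\{p\in\mathbb{Q}[x]^+_{x=\alpha}: p'(\alpha)>0\}$, $H_0=\{p\in\mathbb{Q}[x]^+_{x=\alpha}: p'(\alpha)=0\}$, $H_-=\{p\in\mathbb{Q}[x]^+_{x=\alpha}: p'(\alpha)<0\}$. Then either $H_1\subseteq H_+\cup H_0$ and $H_2\subseteq H_-\cup H_0$, or $H_1\subseteq H_-\cup H_0$ and $H_2\subseteq H_+\cup H_0$. *)

(* Defs.v *)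
From HB Require Import structures.
From mathcomp Require Import all_boot all_order all_algebra.
From mathcomp Require Import reals.
Set Implicit Arguments. Unset Strict Implicit. Unset Printing Implicit Defensive.
Import Order.TTheory GRing.Theory Num.Theory.
Local Open Scope ring_scope.

Definition evalQ (R : realType) (alpha : R) (p : {poly rat}) : R :=
  (map_poly ratr p).[alpha].

Definition Qpos (R : realType) (alpha : R) (p : {poly rat}) : Prop :=
  0 < evalQ alpha p.

Definition Hplus (R : realType) (alpha : R) (p : {poly rat}) : Prop :=
  Qpos alpha p /\ 0 < evalQ alpha p^`().
Definition Hzero (R : realType) (alpha : R) (p : {poly rat}) : Prop :=
  Qpos alpha p /\ evalQ alpha p^`() = 0.
Definition Hminus (R : realType) (alpha : R) (p : {poly rat}) : Prop :=
  Qpos alpha p /\ evalQ alpha p^`() < 0.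

(* Main.v *)
Require Import Defs.
From HB Require Import structures.
From mathcomp Require Import all_boot all_order all_algebra.
From mathcomp Require Import reals ring lra.
Import Order.TTheory GRing.Theory Num.Theory.
Local Open Scope ring_scope.
Set Implicit Arguments. Unset Strict Implicit. Unset Printing Implicit Defensive.

Section Basics.
Variables (R : realType) (alpha : R).
Local Notation L := (evalQ alpha).
Local Notation D p := (evalQ alpha (deriv p)).

Lemma LD p q : L (p + q) = L p + L q.
Proof. by rewrite /evalQ rmorphD hornerD. Qed.
Lemma LM p q : L (p * q) = L p * L q.
Proof. by rewrite /evalQ rmorphM hornerM. Qed.
Lemma LC c : L c%:P = ratr c.
Proof. by rewrite /evalQ map_polyC hornerC. Qed.
Lemma LX : L 'X = alpha.
Proof. by rewrite /evalQ map_polyX hornerX. Qed.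
Lemma LN p : L (- p) = - L p.
Proof. by rewrite /evalQ rmorphN hornerN. Qed.
Lemma LB p q : L (p - q) = L p - L q.
Proof. by rewrite LD LN. Qed.
Lemma LXn p n : L (p ^+ n) = L p ^+ n.
Proof. by rewrite /evalQ rmorphXn horner_exp. Qed.

Lemma DD p q : D (p + q) = D p + D q.
Proof. by rewrite derivD LD. Qed.
Lemma DB p q : D (p - q) = D p - D q.
Proof. by rewrite derivB LB. Qed.
Lemma DM p q : D (p * q) = D p * L q + L p * D q.
Proof. by rewrite derivM LD !LM. Qed.
Lemma DC c : D c%:P = 0.
Proof. by rewrite derivC /evalQ map_poly0 horner0. Qed.
Lemma DX : D 'X = 1.
Proof. by rewrite derivX /evalQ rmorph1 hornerC. Qed.
Lemma DCM c p : D (c%:P * p) = ratr c * D p.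
Proof. by rewrite DM DC mul0r add0r LC. Qed.
Lemma LCM c p : L (c%:P * p) = ratr c * L p.
Proof. by rewrite LM LC. Qed.

Lemma ratr_between (a b : R) : a < b -> exists q : rat, a < ratr q < b.
Proof.
move=> ab; have [q] := rat_in_itvoo ab; rewrite in_itv /= => h; by exists q.
Qed.

Definition pr (r : rat) : {poly rat} := 'X - r%:P.
Definition ps (s : rat) : {poly rat} := s%:P - 'X.
Lemma Lpr r : L (pr r) = alpha - ratr r. Proof. by rewrite LB LX LC. Qed.
Lemma Lps s : L (ps s) = ratr s - alpha. Proof. by rewrite LB LX LC. Qed.
Lemma Dpr r : D (pr r) = 1. Proof. by rewrite DB DX DC subr0. Qed.
Lemma Dps s : D (ps s) = -1. Proof. by rewrite DB DX DC sub0r. Qed.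

Record semipart (A B : {poly rat} -> Prop) := SemiPart {
  sp1 : forall p, Qpos alpha p <-> A p \/ B p;
  sp2 : forall p, ~ (A p /\ B p);
  sp3 : forall p q, A p -> A q -> A (p + q);
  sp4 : forall p q, A p -> A q -> A (p * q);
  sp5 : forall p q, B p -> B q -> B (p + q);
  sp6 : forall p q, B p -> B q -> B (p * q) }.
Arguments sp1 {A B}. Arguments sp2 {A B}. Arguments sp3 {A B}.
Arguments sp4 {A B}. Arguments sp5 {A B}. Arguments sp6 {A B}.

Lemma semipart_sym A B : semipart A B -> semipart B A.
Proof.
case=> h1 h2 h3 h4 h5 h6; split=> //.
  by move=> p; rewrite h1; tauto.
by move=> p [] ? ?; apply: (h2 p).
Qed.

Section Part.
Variables (A B : {poly rat} -> Prop).
Hypothesis hP : semipart A B.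

Lemma posA p : A p -> 0 < L p.
Proof. by move=> Ap; apply: (proj2 (sp1 hP p)); left. Qed.
Lemma posB p : B p -> 0 < L p.
Proof. by move=> Bp; apply: (proj2 (sp1 hP p)); right. Qed.
Lemma notAB p : A p -> B p -> False.
Proof. by move=> ? ?; apply: (sp2 hP p). Qed.
Lemma addA p q : A p -> A q -> A (p + q). Proof. exact: (sp3 hP). Qed.
Lemma mulA p q : A p -> A q -> A (p * q). Proof. exact: (sp4 hP). Qed.
Lemma addB p q : B p -> B q -> B (p + q). Proof. exact: (sp5 hP). Qed.
Lemma mulB p q : B p -> B q -> B (p * q). Proof. exact: (sp6 hP). Qed.
Lemma AorB p : 0 < L p -> A p \/ B p.
Proof. by move=> h; apply: (proj1 (sp1 hP p)). Qed.

Lemma diffB p q : A p -> B q -> 0 < L (q - p) -> B (q - p).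
Proof.
move=> Ap Bq h; case: (AorB h) => // Aqp.
exfalso; apply: (notAB _ Bq); have := addA Aqp Ap; by rewrite subrK.
Qed.

Lemma natmulA p n : A p -> A (p *+ n.+1).
Proof.
move=> Ap; elim: n => [|n IH]; first by rewrite mulr1n.
by rewrite mulrS; apply: addA.
Qed.

Lemma natmulB p n : B p -> B (p *+ n.+1).
Proof.
move=> Bp; elim: n => [|n IH]; first by rewrite mulr1n.
by rewrite mulrS; apply: addB.
Qed.

Lemma ratnumden (c : rat) : 0 < c -> c *+ `|denq c|%N = (`|numq c|%N)%:R.
Proof.
move=> c0.
have n0 : (0 <= numq c)%R by rewrite numq_ge0 ltW.
have d0 : (0 <= denq c)%R by rewrite ltW ?denq_gt0.
have e : forall z : int, (0 <= z)%R -> ((`|z|%N)%:R : rat) = z%:~R.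
  by move=> z hz; rewrite -[in RHS](gez0_abs hz).
by rewrite -[c *+ _]mulr_natr !e // numqE.
Qed.

Lemma scaleA p c : A p -> 0 < c -> A (c%:P * p).
Proof.
move=> Ap c0.
have hpos : 0 < L (c%:P * p) by rewrite LCM mulr_gt0 ?ltr0q // posA.
case: (AorB hpos) => // Bcp; exfalso.
have n0 : (0 < numq c)%R by rewrite numq_gt0.
have d0 := denq_gt0 c.
have km : (0 < `|denq c|)%N by rewrite absz_gt0 gt_eqF.
have mm : (0 < `|numq c|)%N by rewrite absz_gt0 gt_eqF.
have e : (c%:P * p) *+ `|denq c|%N = p *+ `|numq c|%N.
  by rewrite -mulrnAl -polyCMn ratnumden // polyCMn mulrnAl mul1r.
move: (natmulB (`|denq c|%N.-1) Bcp); rewrite prednK // e.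
move: (natmulA (`|numq c|%N.-1) Ap); rewrite prednK //.
exact: notAB.
Qed.

Lemma scaleB p c : B p -> 0 < c -> B (c%:P * p).
Proof.
move=> Bp c0.
have hpos : 0 < L (c%:P * p) by rewrite LCM mulr_gt0 ?ltr0q // posB.
case: (AorB hpos) => // Acp; exfalso.
have n0 : (0 < numq c)%R by rewrite numq_gt0.
have d0 := denq_gt0 c.
have km : (0 < `|denq c|)%N by rewrite absz_gt0 gt_eqF.
have mm : (0 < `|numq c|)%N by rewrite absz_gt0 gt_eqF.
have e : (c%:P * p) *+ `|denq c|%N = p *+ `|numq c|%N.
  by rewrite -mulrnAl -polyCMn ratnumden // polyCMn mulrnAl mul1r.
move: (natmulA (`|denq c|%N.-1) Acp); rewrite prednK // e.
move: (natmulB (`|numq c|%N.-1) Bp); rewrite prednK //.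
by move=> h1 h2; exact: (notAB h2 h1).
Qed.

End Part.
Lemma diffA A B p q : semipart A B -> B p -> A q -> 0 < L (q - p) -> A (q - p).
Proof. by move=> hP Bp Aq h; apply: (diffB (semipart_sym hP) Bp Aq h). Qed.

Section Const.
Variables (A B : {poly rat} -> Prop).
Hypothesis hP : semipart A B.
Hypothesis hA1 : A 1.

Lemma constA c : 0 < c -> A c%:P.
Proof. by move=> c0; rewrite -[c%:P]mulr1; apply: (scaleA hP). Qed.

Lemma shift_aux q : B q -> forall n d, 0 < d -> ratr d < 2 ^+ n * L q ->
  B (q + d%:P).
Proof.
move=> Bq n; elim: n => [|n IH] d d0 hd.
  rewrite expr0 mul1r in hd.
  have hL : 0 < L (q + d%:P) by rewrite LD LC addr_gt0 // ?ltr0q // (posB hP Bq).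
  case: (AorB hP hL) => // Aqd; exfalso.
  have Bqm : B (q - d%:P).
    by apply: (diffB hP (constA d0) Bq); rewrite LB LC subr_gt0.
  have hX : 0 < L ((q + d%:P) ^+ 2 - (q - d%:P) ^+ 2).
    rewrite LB !LXn LD LB LC.
    have := posB hP Bq; have := ltr0q R d; rewrite d0 => h1 h2.
    nra.
  have AX := diffA hP (mulB hP Bqm Bqm) (mulA hP Aqd Aqd) hX.
  have BX := scaleB hP Bq (_ : 0 < 4 * d).
  apply: (notAB hP AX); rewrite (_ : _ - _ = (4 * d)%:P * q).
    by apply: BX; rewrite mulr_gt0.
  by rewrite polyCM; ring.
have hL : 0 < L (q + d%:P) by rewrite LD LC addr_gt0 // ?ltr0q // (posB hP Bq).
case: (AorB hP hL) => // Aqd; exfalso.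
have hY : 0 < L ((q + d%:P) ^+ 2 - q ^+ 2).
  rewrite LB !LXn LD LC.
  have := posB hP Bq; have := ltr0q R d; rewrite d0 => h1 h2.
  nra.
have AY := diffA hP (mulB hP Bq Bq) (mulA hP Aqd Aqd) hY.
have e : (q + d%:P) ^+ 2 - q ^+ 2 = (2 * d)%:P * (q + (d / 2)%:P).
  have -> : (2 * d)%:P * (q + (d / 2)%:P) = (2 * d)%:P * q + (d * d)%:P.
    by rewrite mulrDr -polyCM; congr (_ + _%:P); field.
  by rewrite !polyCM polyC_natr; ring.
have Ah : A (q + (d / 2)%:P).
  have -> : q + (d / 2)%:P = ((2 * d)^-1)%:P * ((q + d%:P) ^+ 2 - q ^+ 2).
    by rewrite e mulrA -polyCM mulVf ?mul1r // mulf_neq0 // gt_eqF.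
  by apply: (scaleA hP AY); rewrite invr_gt0 mulr_gt0.
apply: (notAB hP Ah); apply: IH; first by rewrite divr_gt0.
rewrite exprS in hd; rewrite fmorph_div /= ratr_nat.
have h2 : (0 : R) < 2 by [].
rewrite ltr_pdivrMr //; by rewrite mulrC mulrA.
Qed.

Lemma shiftB q d : B q -> 0 < d -> B (q + d%:P).
Proof.
move=> Bq d0; have Lq := posB hP Bq.
set N := Num.Def.archi_bound (ratr d / L q).
have hN : ratr d / L q < N%:R by apply: archi_boundP; rewrite divr_ge0 // ?ler0q ltW.
apply: (shift_aux Bq (n := N)) => //.
have h2 : (N%:R : R) <= 2 ^+ N.
  by rewrite -natrX ler_nat ltnW // ltn_expl.
rewrite -ltr_pdivrMr //; exact: (lt_le_trans hN h2).
Qed.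

Lemma prB_all r0 : B (pr r0) -> forall r, ratr r < alpha -> B (pr r).
Proof.
move=> Br0 r hr; case: (ltgtP r r0) => [lt|gt|->] //.
  have -> : pr r = pr r0 + (r0 - r)%:P by rewrite /pr polyCB; ring.
  by apply: shiftB; rewrite // subr_gt0.
have -> : pr r = pr r0 - (r - r0)%:P by rewrite /pr polyCB; ring.
apply: (diffB hP); first by apply: constA; rewrite subr_gt0.
  by [].
by rewrite LB Lpr LC rmorphB /=; lra.
Qed.

Lemma prA_all r0 : A (pr r0) -> ratr r0 < alpha -> forall r, ratr r < alpha -> A (pr r).
Proof.
move=> Ar0 h0 r hr; have hL : 0 < L (pr r) by rewrite Lpr subr_gt0.
case: (AorB hP hL) => // Br; exfalso.
exact: (notAB hP Ar0 (prB_all Br h0)).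
Qed.

Lemma psB_all s0 : B (ps s0) -> forall s, alpha < ratr s -> B (ps s).
Proof.
move=> Bs0 s hs; case: (ltgtP s s0) => [lt|gt|->] //.
  have -> : ps s = ps s0 - (s0 - s)%:P by rewrite /ps polyCB; ring.
  apply: (diffB hP); first by apply: constA; rewrite subr_gt0.
    by [].
  by rewrite LB Lps LC rmorphB /=; lra.
have -> : ps s = ps s0 + (s - s0)%:P by rewrite /ps polyCB; ring.
by apply: shiftB; rewrite // subr_gt0.
Qed.

Lemma psA_all s0 : A (ps s0) -> alpha < ratr s0 -> forall s, alpha < ratr s -> A (ps s).
Proof.
move=> As0 h0 s hs; have hL : 0 < L (ps s) by rewrite Lps subr_gt0.
case: (AorB hP hL) => // Bs; exfalso.
exact: (notAB hP As0 (psB_all Bs h0)).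
Qed.

End Const.

Definition Gfam (A : {poly rat} -> Prop) (sg : bool) :=
  forall eps : R, 0 < eps -> exists G,
    [/\ A G, size G = 3%N, lead_coef G = (-1) ^+ sg, L G < eps & `|D G| < eps].

Definition Efam (A : {poly rat} -> Prop) :=
  forall (n : nat) (sg : bool) (eps : R), 0 < eps -> exists E,
    [/\ A E, size E = n.+3, lead_coef E = (-1) ^+ sg, L E < eps & `|D E| < eps].

Lemma quad_shape (G c1 c0 : {poly rat}) : (size c1 <= 1)%N -> (size c0 <= 1)%N ->
  G = - 'X^2 + ('X * c1 + c0) -> size G = 3%N /\ lead_coef G = -1.
Proof.
move=> h1 h0 ->.
have hs : (size ('X * c1 + c0)%R < size (- ('X^2 : {poly rat}))%R)%N.
  rewrite size_opp size_polyXn.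
  apply: (leq_ltn_trans (size_add _ _)); rewrite gtn_max.
  apply/andP; split; last by apply: (leq_ltn_trans h0).
  apply: (leq_ltn_trans (size_mul_leq _ _)); rewrite size_polyX.
  by case: (size c1) h1 => [|[|]].
split; first by rewrite size_addl // size_opp size_polyXn.
by rewrite lead_coefDl // lead_coefN lead_coefXn.
Qed.

Lemma rat_near_below (m : R) : 0 < m -> exists r : rat, alpha - m < ratr r < alpha.
Proof. move=> m0; apply: ratr_between; lra. Qed.
Lemma rat_near_above (m : R) : 0 < m -> exists r : rat, alpha < ratr r < alpha + m.
Proof. move=> m0; apply: ratr_between; lra. Qed.

Lemma Gpos (A : {poly rat} -> Prop) :
  (forall p q, A p -> A q -> A (p * q)) ->
  (forall r, ratr r < alpha -> A (pr r)) -> Gfam A false.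
Proof.
move=> mulA prA eps e0.
have m0 : 0 < Num.min 1 (eps / 2) by rewrite lt_min ltr01 divr_gt0.
have [r /andP[h1 h2]] := rat_near_below m0.
have hm1 : Num.min 1 (eps / 2) <= 1 by rewrite ge_min lexx.
have hm2 : Num.min 1 (eps / 2) <= eps / 2 by rewrite ge_min lexx orbT.
exists (pr r ^+ 2); split.
- by apply: mulA; apply: prA.
- by rewrite size_exp_XsubC.
- by rewrite expr0; apply/monicP; rewrite monic_exp // monicXsubC.
- rewrite LXn Lpr; set u := alpha - ratr r.
  have u0 : 0 < u by rewrite /u; lra.
  have u1 : u < 1 by rewrite /u; lra.
  have u2 : u < eps / 2 by rewrite /u; lra.
  nra.
- rewrite expr2 DM Dpr Lpr mul1r mulr1; set u := alpha - ratr r.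
  have u2 : u < eps / 2 by rewrite /u; lra.
  have u0 : 0 < u by rewrite /u; lra.
  rewrite ger0_norm; lra.
Qed.


Lemma Gneg_ab (A B : {poly rat} -> Prop) : semipart A B ->
  (forall r, ratr r < alpha -> A (pr r)) ->
  (forall s, alpha < ratr s -> B (ps s)) -> Gfam A true.
Proof.
move=> hP prA psB eps e0.
have m0 : 0 < Num.min 1 (eps / 6) by rewrite lt_min ltr01 divr_gt0.
have [r /andP[h1 h2]] := rat_near_below m0.
have hm1 : Num.min 1 (eps / 6) <= 1 by rewrite ge_min lexx.
have hm2 : Num.min 1 (eps / 6) <= eps / 6 by rewrite ge_min lexx orbT.
set u := alpha - ratr r.
have u0 : 0 < u by rewrite /u; lra.
have u1 : u < 1 by rewrite /u; lra.
have u2 : u < eps / 6 by rewrite /u; lra.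
have u20 : 0 < u / 2 by rewrite divr_gt0.
have [s /andP[h3 h4]] := rat_near_above u20.
set v := ratr s - alpha.
have v0 : 0 < v by rewrite /v; lra.
have v1 : v < u / 2 by rewrite /v; lra.
exists (pr r ^+ 2 - 2%:P * ps s ^+ 2); split.
- apply: (diffA hP).
  + apply: (scaleB hP) => //; by apply: (mulB hP); apply: psB.
  + by apply: (mulA hP); apply: prA.
  rewrite LB LCM !LXn Lpr Lps -/u -/v ratr_nat; nra.
- have [] := @quad_shape (pr r ^+ 2 - 2%:P * ps s ^+ 2) (4%:P * s%:P - 2%:P * r%:P)
     (r%:P ^+ 2 - 2%:P * s%:P ^+ 2).
  + have -> : 4%:P * s%:P - 2%:P * r%:P = (4 * s - 2 * r)%:P :> {poly rat}.
      by rewrite polyCB !polyCM.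
    exact: size_polyC_leq1.
  + have -> : r%:P ^+ 2 - 2%:P * s%:P ^+ 2 = (r ^+ 2 - 2 * s ^+ 2)%:P :> {poly rat}.
      by rewrite !expr2 polyCB !polyCM.
    exact: size_polyC_leq1.
  + rewrite /pr /ps !polyC_natr; ring.
  by [].
- have [] := @quad_shape (pr r ^+ 2 - 2%:P * ps s ^+ 2) (4%:P * s%:P - 2%:P * r%:P)
     (r%:P ^+ 2 - 2%:P * s%:P ^+ 2).
  + have -> : 4%:P * s%:P - 2%:P * r%:P = (4 * s - 2 * r)%:P :> {poly rat}.
      by rewrite polyCB !polyCM.
    exact: size_polyC_leq1.
  + have -> : r%:P ^+ 2 - 2%:P * s%:P ^+ 2 = (r ^+ 2 - 2 * s ^+ 2)%:P :> {poly rat}.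
      by rewrite !expr2 polyCB !polyCM.
    exact: size_polyC_leq1.
  + rewrite /pr /ps !polyC_natr; ring.
  by move=> _ ->; rewrite expr1.
- rewrite LB LCM !LXn Lpr Lps -/u -/v ratr_nat; nra.
- rewrite DB DCM !expr2 !DM Dpr Dps Lpr Lps -/u -/v ratr_nat.
  rewrite ger0_norm; nra.
Qed.

Lemma Gneg_c (A : {poly rat} -> Prop) :
  (forall p q, A p -> A q -> A (p * q)) ->
  (forall r, ratr r < alpha -> A (pr r)) ->
  (forall s, alpha < ratr s -> A (ps s)) -> Gfam A true.
Proof.
move=> mulA prA psA eps e0.
have m0 : 0 < Num.min 1 eps by rewrite lt_min ltr01.
have hm1 : Num.min 1 eps <= 1 by rewrite ge_min lexx.
have hm2 : Num.min 1 eps <= eps by rewrite ge_min lexx orbT.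
have [r /andP[h1 h2]] := rat_near_below m0.
have [s /andP[h3 h4]] := rat_near_above m0.
set u := alpha - ratr r.
have u0 : 0 < u by rewrite /u; lra.
have u1 : u < Num.min 1 eps by rewrite /u; lra.
set v := ratr s - alpha.
have v0 : 0 < v by rewrite /v; lra.
have v1 : v < Num.min 1 eps by rewrite /v; lra.
have [hs hl] : size (pr r * ps s) = 3%N /\ lead_coef (pr r * ps s) = -1.
  apply: (@quad_shape _ (r%:P + s%:P) (- (r%:P * s%:P))).
  - by rewrite -polyCD size_polyC_leq1.
  - by rewrite -polyCM -polyCN size_polyC_leq1.
  - by rewrite /pr /ps; ring.
exists (pr r * ps s); split.
- by apply: mulA; [apply: prA | apply: psA].
- exact: hs.
- by rewrite hl expr1.
- rewrite LM Lpr Lps -/u -/v; nra.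
- rewrite DM Dpr Dps Lpr Lps -/u -/v.
  have -> : 1 * v + u * -1 = v - u by ring.
  rewrite ltr_norml; apply/andP; split; lra.
Qed.


Lemma LMn p n : L (p *+ n) = L p *+ n.
Proof. by rewrite /evalQ rmorphMn hornerMn. Qed.

Lemma Efam_of (A : {poly rat} -> Prop) :
  (forall p, A p -> 0 < L p) ->
  (forall p q, A p -> A q -> A (p * q)) ->
  (forall r, ratr r < alpha -> A (pr r)) ->
  Gfam A false -> Gfam A true -> Efam A.
Proof.
move=> posA mulA prA Gp Gn n sg eps e0.
have [r0 /andP[h1 h2]] := rat_near_below (@ltr01 R).
set u := alpha - ratr r0.
have u0 : 0 < u by rewrite /u; lra.
have u1 : u < 1 by rewrite /u; lra.
have N0 : (0 : R) < (n.+2)%:R by rewrite ltr0n.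
have en : 0 < eps / (n.+2)%:R by rewrite divr_gt0.
have GF : Gfam A sg by case: sg.
have [G [AG sG lG LG DG]] := GF _ en.
have powA : forall k, A (pr r0 ^+ k.+1).
  elim=> [|k IH]; first by rewrite expr1; apply: prA.
  by rewrite exprS; apply: mulA => //; apply: prA.
have mon : pr r0 ^+ n \is monic by rewrite monic_exp // monicXsubC.
have G0 : G != 0 by rewrite -size_poly_eq0 sG.
have LG0 := posA _ AG.
have a0 : 0 <= u ^+ n.-1 by rewrite exprn_ge0 // ltW.
have a1 : u ^+ n.-1 <= 1 by rewrite exprn_ile1 // ltW.
have b0 : 0 <= u ^+ n by rewrite exprn_ge0 // ltW.
have b1 : u ^+ n <= 1 by rewrite exprn_ile1 // ltW.
have eE : eps = eps / (n.+2)%:R * (n.+2)%:R by rewrite divfK // gt_eqF.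
set e' := eps / (n.+2)%:R in en LG DG eE.
exists (pr r0 ^+ n * G); split.
- have [->|n0] := posnP n; first by rewrite expr0 mul1r.
  by apply: mulA => //; rewrite -(prednK n0); apply: powA.
- by rewrite size_monicM // size_exp_XsubC sG addnC.
- by rewrite lead_coef_monicM.
- rewrite LM LXn Lpr -/u.
  have : u ^+ n * L G <= L G by rewrite ler_piMl // ltW.
  have N1 : (1 : R) <= (n.+2)%:R by rewrite ler1n.
  have : e' <= eps by rewrite eE; nra.
  lra.
- rewrite DM deriv_exp derivXsubC mul1r LMn !LXn !Lpr -/u.
  set a := u ^+ n.-1; set b := u ^+ n.
  have hX0 : 0 <= a * L G by rewrite mulr_ge0 // ltW.
  have hX1 : a * L G <= e'.
    by apply: le_trans (ltW LG); rewrite ler_piMl // ltW.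
  have hD : `|b * D G| <= e'.
    by rewrite normrM ger0_norm //; apply: le_trans (ltW DG); rewrite ler_piMl.
  have hN : (n%:R : R) * (a * L G) <= n%:R * e' by rewrite ler_wpM2l.
  have -> : a *+ n * L G = n%:R * (a * L G) by rewrite mulrA mulr_natl.
  have hE : eps = (n%:R + 2) * e' by rewrite eE mulrC -addn2 natrD.
  move: hD; rewrite !ler_norml => /andP[hD1 hD2].
  rewrite ltr_norml; apply/andP; split.
    have : 0 <= (n%:R : R) * (a * L G) by rewrite mulr_ge0.
    nra.
  nra.
Qed.


Lemma reduce (A B : {poly rat} -> Prop) : semipart A B -> Efam A ->
  forall k (Q : {poly rat}), (size Q <= k)%N -> B Q -> 0 < D Q ->
  exists Q', [/\ B Q', (size Q' <= 2)%N & 0 < D Q'].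
Proof.
move=> hP EA; elim=> [|k IH] Q hs BQ DQ.
  by exists Q; split => //; apply: leq_trans hs _.
case: (leqP (size Q) 2) => hQ2; first by exists Q.
have [n hn] : exists n, size Q = n.+3.
  by exists (size Q - 3)%N; rewrite -addn3 subnK.
set a := lead_coef Q.
have a0 : a != 0 by rewrite lead_coef_eq0 -size_poly_eq0 hn.
set lam := `|a|.
have lam0 : 0 < lam by rewrite normr_gt0.
have LQ := posB hP BQ.
have rl0 : (0 : R) < ratr lam by rewrite ltr0q.
have e0 : 0 < Num.min (L Q) (D Q) / ratr lam by rewrite divr_gt0 // lt_min LQ DQ.
have [E [AE sE lE LE DE]] := EA n (a < 0) _ e0.
have hm1 : Num.min (L Q) (D Q) <= L Q by rewrite ge_min lexx.
have hm2 : Num.min (L Q) (D Q) <= D Q by rewrite ge_min lexx orbT.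
have hb : forall x : R, x < Num.min (L Q) (D Q) / ratr lam -> ratr lam * x < Num.min (L Q) (D Q).
  by move=> x hx; rewrite mulrC -ltr_pdivlMr.
set Q' := Q - lam%:P * E.
have LQ' : 0 < L Q'.
  rewrite /Q' LB LCM; have := hb _ LE; lra.
have DQ' : 0 < D Q'.
  rewrite /Q' DB DCM; have := hb _ (le_lt_trans (ler_norm (D E)) DE).
  have := ler_norm (D E); nra.
have BQ' : B Q' by apply: (diffB hP) => //; apply: (scaleA hP).
have sQ' : (size Q' <= n.+2)%N.
  apply/leq_sizeP => j hj; rewrite /Q' coefB coefCM.
  case: (ltngtP j n.+2) => [|hj2|->].
  - by rewrite ltnNge hj.
  - have := leq_sizeP Q n.+3; rewrite hn leqnn => /(_ isT j hj2) ->.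
    have := leq_sizeP E n.+3; rewrite sE leqnn => /(_ isT j hj2) ->.
    by rewrite mulr0 subr0.
  - have -> : Q`_n.+2 = a by rewrite /a lead_coefE hn.
    have -> : E`_n.+2 = (-1) ^+ (a < 0)%R by rewrite -lE lead_coefE sE.
    rewrite /lam; case: ltrP => ha.
      by rewrite expr1 mulrN1 ltr0_norm // opprK subrr.
    by rewrite expr0 mulr1 ger0_norm // subrr.
have := IH Q' _ BQ' DQ'; apply.
by apply: leq_trans sQ' _; rewrite -ltnS -hn.
Qed.

Lemma lin_shape (Q : {poly rat}) : (size Q <= 2)%N -> Q = (Q`_1)%:P * 'X + (Q`_0)%:P.
Proof.
move=> hs; apply/polyP => i; rewrite coefD coefCM coefX coefC.
case: i => [|[|i]] /=; first by rewrite mulr0 add0r.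
  by rewrite mulr1 addr0.
have := leq_sizeP Q 2; rewrite hs => /(_ isT i.+2 isT) ->.
by rewrite mulr0 addr0.
Qed.

Lemma mainB (A B : {poly rat} -> Prop) : semipart A B ->
  (forall r, ratr r < alpha -> A (pr r)) -> Efam A ->
  forall Q, B Q -> D Q <= 0.
Proof.
move=> hP prA EA Q BQ; rewrite leNgt; apply/negP => DQ.
have [Q' [BQ' s2 DQ']] := reduce hP EA (leqnn (size Q)) BQ DQ.
have LQ' := posB hP BQ'.
have eQ := lin_shape s2.
set c1 := Q'`_1 in eQ; set c0 := Q'`_0 in eQ.
have Dc : D Q' = ratr c1 by rewrite eQ DD DC addr0 DCM DX mulr1.
have c10 : 0 < c1 by rewrite -(ltr0q R) -Dc.
have Lc : L Q' = ratr c1 * alpha + ratr c0 by rewrite eQ LD LCM LX LC.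
set r0 := - c0 / c1.
have hr : ratr r0 * ratr c1 = - ratr c0 :> R.
  by rewrite -rmorphM -rmorphN /r0 divfK ?gt_eqF.
have hr0 : ratr r0 < alpha.
  have : (0 : R) < ratr c1 by rewrite ltr0q.
  move: LQ'; rewrite Lc; nra.
have eQ2 : Q' = c1%:P * pr r0.
  rewrite eQ /pr mulrBr -polyCM /r0 mulrCA divff ?gt_eqF // mulr1 polyCN.
  by rewrite opprK mulrC.
apply: (notAB hP _ BQ'); rewrite eQ2; apply: (scaleA hP) => //.
exact: prA.
Qed.

Lemma mainA (A B : {poly rat} -> Prop) : semipart A B ->
  (forall r, ratr r < alpha -> A (pr r)) -> Efam A ->
  (forall s, alpha < ratr s -> B (ps s)) ->
  forall P, A P -> 0 <= D P.
Proof.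
move=> hP prA EA psB P AP; rewrite leNgt; apply/negP => DP.
have LP := posA hP AP.
have hx : 0 < (- D P)^-1 by rewrite invr_gt0 oppr_gt0.
have hx1 : (- D P)^-1 < (- D P)^-1 + 1 by rewrite ltrDl.
have [k /andP[hk1 hk2]] := ratr_between hx1.
have hk0 : (0 : R) < ratr k by apply: lt_trans hk1.
have k0 : 0 < k by rewrite -(ltr0q R).
have hkD : 1 < ratr k * (- D P).
  by rewrite -ltr_pdivrMr ?oppr_gt0 // div1r.
have hx2 : alpha + ratr k * L P < alpha + ratr k * L P + 1 by rewrite ltrDl.
have [s /andP[hs1 hs2]] := ratr_between hx2.
have hL : 0 < L (ps s - k%:P * P).
  rewrite LB Lps LCM.
  have : 0 < ratr k * L P by rewrite mulr_gt0.
  lra.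
have BQ : B (ps s - k%:P * P).
  apply: (diffB hP) => //; first by apply: (scaleA hP).
  apply: psB; have : 0 < ratr k * L P by rewrite mulr_gt0.
  lra.
have := mainB hP prA EA BQ.
rewrite DB Dps DCM; lra.
Qed.


Lemma core (A B : {poly rat} -> Prop) : semipart A B -> A 1 -> (exists q, B q) ->
  ((forall p, A p -> 0 <= D p) /\ (forall p, B p -> D p <= 0)) \/
  ((forall p, A p -> D p <= 0) /\ (forall p, B p -> 0 <= D p)).
Proof.
move=> hP hA1 [q Bq].
have [r0 /andP[h1 h2]] := rat_near_below (@ltr01 R).
have [s0 /andP[h3 h4]] := rat_near_above (@ltr01 R).
have Lr : 0 < L (pr r0) by rewrite Lpr subr_gt0.
have Ls : 0 < L (ps s0) by rewrite Lps subr_gt0.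
have pA : forall p, A p -> 0 < L p by move=> p Ap; exact: (posA hP Ap).
have pB : forall p, B p -> 0 < L p by move=> p Bp; exact: (posB hP Bp).
have mA : forall p q, A p -> A q -> A (p * q) by move=> p q' hp hq; exact: (mulA hP hp hq).
have mB : forall p q, B p -> B q -> B (p * q) by move=> p q' hp hq; exact: (mulB hP hp hq).
case: (AorB hP Lr) => [Ar|Br]; case: (AorB hP Ls) => [As|Bs].
- exfalso.
  have prA := prA_all hP hA1 Ar h2.
  have psA := psA_all hP hA1 As h3.
  have EA := Efam_of pA mA prA (Gpos mA prA) (Gneg_c mA prA psA).
  have hmB := mainB hP prA EA.
  have LQ := pB _ Bq.
  have hx1 : `|D q| < `|D q| + 1 by rewrite ltrDl.
  have [k /andP[hk1 hk2]] := ratr_between hx1.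
  have hk0 : (0 : R) < ratr k by apply: le_lt_trans hk1.
  have k0 : 0 < k by rewrite -(ltr0q R).
  have hy : 0 < L q / ratr k by rewrite divr_gt0.
  have [s /andP[hs1 hs2]] := rat_near_above hy.
  have hks : ratr k * (ratr s - alpha) < L q.
    by rewrite mulrC -ltr_pdivlMr //; lra.
  have hL : 0 < L (q - k%:P * ps s) by rewrite LB LCM Lps; lra.
  have As' : A (ps s) by apply: psA.
  have BQ := diffB hP (scaleA hP As' k0) Bq hL.
  have := hmB _ BQ; rewrite DB DCM Dps.
  have := ler_norm (- D q); rewrite normrN.
  lra.
- left.
  have prA := prA_all hP hA1 Ar h2.
  have psB := psB_all hP hA1 Bs.
  have EA := Efam_of pA mA prA (Gpos mA prA) (Gneg_ab hP prA psB).
  split; [exact: (mainA hP prA EA psB) | exact: (mainB hP prA EA)].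
- right.
  have prB := prB_all hP hA1 Br.
  have psA := psA_all hP hA1 As h3.
  have hP' := semipart_sym hP.
  have EB := Efam_of pB mB prB (Gpos mB prB) (Gneg_ab hP' prB psA).
  split; [exact: (mainB hP' prB EB) | exact: (mainA hP' prB EB psA)].
- exfalso.
  have := addB hP Br Bs.
  have -> : pr r0 + ps s0 = (s0 - r0)%:P by rewrite /pr /ps polyCB; ring.
  apply: (notAB hP); apply: (constA hP hA1).
  by rewrite subr_gt0 -(ltr_rat R); lra.
Qed.

End Basics.

Lemma toPZ (R : realType) (alpha : R) p : Qpos alpha p -> 0 <= evalQ alpha p^`() ->
  Hplus alpha p \/ Hzero alpha p.
Proof.
move=> hq; rewrite le_eqVlt => /orP[/eqP e|lt]; [right|left]; split => //.
Qed.

Lemma toMZ (R : realType) (alpha : R) p : Qpos alpha p -> evalQ alpha p^`() <= 0 ->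
  Hminus alpha p \/ Hzero alpha p.
Proof.
move=> hq; rewrite le_eqVlt => /orP[/eqP e|lt]; [right|left]; split => //.
Qed.

Theorem proposition4p1 (R : realType) (alpha : R) (H1 H2 : {poly rat} -> Prop) :
  (forall p, Qpos alpha p <-> (H1 p \/ H2 p)) ->
  (forall p, ~ (H1 p /\ H2 p)) ->
  (exists p, H1 p) -> (exists p, H2 p) ->
  (forall p q, H1 p -> H1 q -> H1 (p + q)) ->
  (forall p q, H1 p -> H1 q -> H1 (p * q)) ->
  (forall p q, H2 p -> H2 q -> H2 (p + q)) ->
  (forall p q, H2 p -> H2 q -> H2 (p * q)) ->
  ((forall p, H1 p -> Hplus alpha p \/ Hzero alpha p) /\
   (forall p, H2 p -> Hminus alpha p \/ Hzero alpha p)) \/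
  ((forall p, H1 p -> Hminus alpha p \/ Hzero alpha p) /\
   (forall p, H2 p -> Hplus alpha p \/ Hzero alpha p)).
Proof.
move=> h1 h2 [p1 H1p] [p2 H2p] a1 m1 a2 m2.
have hP : semipart alpha H1 H2 by split.
have q1 : forall p, H1 p -> Qpos alpha p by move=> p hp; apply/h1; left.
have q2 : forall p, H2 p -> Qpos alpha p by move=> p hp; apply/h1; right.
have L1 : Qpos alpha 1 by rewrite /Qpos -polyC1 LC rmorph1 ltr01.
case: (proj1 (h1 1) L1) => h11.
- case: (core hP h11 (ex_intro _ p2 H2p)) => [[hA hB]|[hA hB]].
  + by left; split => p hp; [apply: toPZ (q1 _ hp) (hA p hp) | apply: toMZ (q2 _ hp) (hB p hp)].
  + by right; split => p hp; [apply: toMZ (q1 _ hp) (hA p hp) | apply: toPZ (q2 _ hp) (hB p hp)].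
- case: (core (semipart_sym hP) h11 (ex_intro _ p1 H1p)) => [[hA hB]|[hA hB]].
  + by right; split => p hp; [apply: toMZ (q1 _ hp) (hB p hp) | apply: toPZ (q2 _ hp) (hA p hp)].
  + by left; split => p hp; [apply: toPZ (q1 _ hp) (hB p hp) | apply: toMZ (q2 _ hp) (hA p hp)].
Qed.
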